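(* Let $L$ be one of the logics $\mathbf{IL}^-(\mathbf{J4}_{+})$, $\mathbf{IL}^-(\mathbf{J1},\mathbf{J4}_{+})$, $\mathbf{IL}^-(\mathbf{J4}_{+},\mathbf{J5})$, $\mathbf{IL}^-(\mathbf{J1},\mathbf{J4}_{+},\mathbf{J5})$. For any modal formula $A$ the following are equivalent: (i) $L\vdash A$; (ii) $A$ is valid in all simplified $L$-frames; (iii) $A$ is valid in all finite simplified $L$-frames.
   Context: Modal formulas are built from propositional variables, $\top$, $\bot$ using $\to,\lor,\land$, unary $\Box$ and binary $\rhd$; $\lnot A:=A\to\bot$, $\Diamond A:=\lnot\Box\lnot A$. The logic $\mathbf{IL}^-$ has as axioms all tautologies, $\Box(A\to B)\to(\Box A\to\Box B)$, $\Box(\Box A\to A)\to\Box A$, $\mathbf{J3}$: $(A\rhd C)\land(B\rhd C)\to(A\lor B)\rhd C$, and $\mathbf{J6}$: $\Box\lnot A\leftrightarrow A\rhd\bot$; its rules are modus ponens, necessitation ($A/\Box A$), $\mathbf{R1}$: from $A\to B$ infer $C\rhd A\to C\rhd B$, and $\mathbf{R2}$: from $A\to B$ infer $B\rhd C\to A\rhd C$. $\mathbf{IL}^-(\Sigma_1,\dots,\Sigma_n)$ denotes $\mathbf{IL}^-$ with the axiom schemes $\Sigma_i$ added, where $\mathbf{J1}$: $\Box(A\to B)\to A\rhd B$; $\mathbf{J4}_{+}$: $\Box(A\to B)\to(C\rhd A\to C\rhd B)$; $\mathbf{J5}$: $\Diamond A\rhd A$. A simplified $\mathbf{IL}^-(\mathbf{J4}_{+})$-frame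 is $(W,R,S)$ with $W$ non-empty, $R$ a transitive, conversely well-founded binary relation on $W$, $S$ any binary relation on $W$; it is finite if $W$ is finite. Forcing: arbitrary on variables, Boolean clauses as usual, $x\Vdash\Box A$ iff $y\Vdash A$ for all $y$ with $xRy$, and $x\Vdash A\rhd B$ iff for every $y$ with $xRy$ and $y\Vdash A$ there is $z$ with $xRz$, $ySz$, $z\Vdash B$. $A$ is valid in a frame if it is forced at every point under every forcing relation. A simplified $L$-frame is a simplified $\mathbf{IL}^-(\mathbf{J4}_{+})$-frame such that: if $\mathbf{J1}$ is an axiom of $L$ then $S$ is reflexive; if $\mathbf{J5}$ is an axiom of $L$ then $R\subseteq S$. *)

(* Defs.v *)
From Stdlib Require Import List.

Inductive form : Type :=
| Var : nat -> form
| Top : form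
| Bot : form
| Imp : form -> form -> form
| Or  : form -> form -> form
| And : form -> form -> form
| Box : form -> form
| Rhd : form -> form -> form.

Definition Neg (A : form) : form := Imp A Bot.
Definition Dia (A : form) : form := Neg (Box (Neg A)).
Definition Iff (A B : form) : form := And (Imp A B) (Imp B A).

Fixpoint peval (v : form -> bool) (A : form) : bool :=
  match A with
  | Var _ => v A
  | Top => true
  | Bot => false
  | Imp B C => implb (peval v B) (peval v C)
  | Or B C => orb (peval v B) (peval v C)
  | And B C => andb (peval v B) (peval v C)
  | Box _ => v A
  | Rhd _ _ => v A
  end.

(* A is a tautology: true under every truth assignment to its atoms
   (= substitution instance of a propositional tautology). *)
Definition tautology (A : form) : Prop := forall v : form -> bool, peval v A = true.

(* Provability in IL^-(J4+) extended by J1 (if j1 = true) and J5 (if j5 = true). *)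
Inductive prov (j1 j5 : bool) : form -> Prop :=
| ax_taut : forall A, tautology A -> prov j1 j5 A
| ax_K : forall A B, prov j1 j5 (Imp (Box (Imp A B)) (Imp (Box A) (Box B)))
| ax_L : forall A, prov j1 j5 (Imp (Box (Imp (Box A) A)) (Box A))
| ax_J3 : forall A B C,
    prov j1 j5 (Imp (And (Rhd A C) (Rhd B C)) (Rhd (Or A B) C))
| ax_J6 : forall A, prov j1 j5 (Iff (Box (Neg A)) (Rhd A Bot))
| ax_J4p : forall A B C,
    prov j1 j5 (Imp (Box (Imp A B)) (Imp (Rhd C A) (Rhd C B)))
| ax_J1 : forall A B, j1 = true -> prov j1 j5 (Imp (Box (Imp A B)) (Rhd A B))
| ax_J5 : forall A, j5 = true -> prov j1 j5 (Rhd (Dia A) A)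
| r_MP : forall A B, prov j1 j5 (Imp A B) -> prov j1 j5 A -> prov j1 j5 B
| r_Nec : forall A, prov j1 j5 A -> prov j1 j5 (Box A)
| r_R1 : forall A B C, prov j1 j5 (Imp A B) -> prov j1 j5 (Imp (Rhd C A) (Rhd C B))
| r_R2 : forall A B C, prov j1 j5 (Imp A B) -> prov j1 j5 (Imp (Rhd B C) (Rhd A C)).

Definition simplified_frame (W : Type) (R S : W -> W -> Prop) : Prop :=
  inhabited W /\
  (forall x y z, R x y -> R y z -> R x z) /\
  well_founded (fun y x => R x y).

Definition simplified_L_frame (j1 j5 : bool) (W : Type) (R S : W -> W -> Prop) : Prop :=
  simplified_frame W R S /\
  (j1 = true -> forall x, S x x) /\
  (j5 = true -> forall x y, R x y -> S x y).

Definition finite_type (W : Type) : Prop := exists l : list W, forall x : W, In x l.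

Fixpoint forces {W : Type} (R S : W -> W -> Prop) (V : nat -> W -> Prop)
  (x : W) (A : form) : Prop :=
  match A with
  | Var p => V p x
  | Top => True
  | Bot => False
  | Imp B C => forces R S V x B -> forces R S V x C
  | Or B C => forces R S V x B \/ forces R S V x C
  | And B C => forces R S V x B /\ forces R S V x C
  | Box B => forall y, R x y -> forces R S V y B
  | Rhd B C => forall y, R x y -> forces R S V y B ->
                 exists z, R x z /\ S y z /\ forces R S V z C
  end.

Definition valid_in {W : Type} (R S : W -> W -> Prop) (A : form) : Prop :=
  forall (V : nat -> W -> Prop) (x : W), forces R S V x A.

(* Main.v *)
Require Import Defs.
From Stdlib Require Import List Arith Lia Classical ClassicalEpsilon ProofIrrelevance Wf_nat.
Import ListNotations.


Section Sound.
Variables (W : Type) (R S : W -> W -> Prop) (V : nat -> W -> Prop).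

Definition bv (x : W) (A : form) : bool :=
  if excluded_middle_informative (forces R S V x A) then true else false.

Lemma peval_forces x A : peval (bv x) A = true <-> forces R S V x A.
Proof.
  induction A; simpl;
    try (unfold bv; destruct excluded_middle_informative; split; intros; auto; try discriminate; contradiction).
  - split; auto.
  - split; intro H; [discriminate | contradiction].
  - destruct (peval (bv x) A1), (peval (bv x) A2); simpl; firstorder; try discriminate.
  - destruct (peval (bv x) A1), (peval (bv x) A2); simpl; firstorder; try discriminate.
  - destruct (peval (bv x) A1), (peval (bv x) A2); simpl; firstorder; try discriminate.
Qed.
End Sound.

Lemma soundness j1 j5 A : prov j1 j5 A ->
  forall W R S, simplified_L_frame j1 j5 W R S -> valid_in R S A.
Proof.
  intros HP W R S [[Hinh [Htr Hwf]] [HJ1 HJ5]].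
  induction HP; intros V x; simpl in *.
  - apply (peval_forces W R S V x). apply H.
  - intros H1 H2 y Hy. apply H1; auto.
  - intros H y. pattern y. apply (well_founded_ind Hwf). clear y.
    intros y IH Hxy. apply (H y Hxy). intros w Hyw. apply IH; [exact Hyw | eapply Htr; eauto].
  - intros [H1 H2] y Hxy [Hy|Hy]; [apply H1|apply H2]; auto.
  - split.
    + intros H y Hxy Hy. exfalso; exact (H y Hxy Hy).
    + intros H y Hxy Hy. destruct (H y Hxy Hy) as [z [_ [_ []]]].
  - intros HB HC y Hxy Hy. destruct (HC y Hxy Hy) as [z [? [? ?]]]. exists z; auto.
  - intros HB y Hxy Hy. exists y. split; [|split]; auto.
  - intros y Hxy Hy.
    destruct (classic (exists w, R y w /\ forces R S V w A)) as [[w [Hw1 Hw2]]|Hn].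
    + exists w. split; [eapply Htr; eauto|split; auto].
    + exfalso; apply Hy; intros w Hw Hf; apply Hn; eauto.
  - apply IHHP1. apply IHHP2.
  - intros y _. apply IHHP.
  - intros H y Hxy Hy. destruct (H y Hxy Hy) as [z [? [? ?]]]. exists z. repeat split; auto.
    apply (IHHP V z); auto.
  - intros H y Hxy Hy. apply H; auto. apply (IHHP V y); auto.
Qed.


Fixpoint conjL (l : list form) : form :=
  match l with [] => Top | a :: l' => And a (conjL l') end.
Fixpoint disjL (l : list form) : form :=
  match l with [] => Bot | a :: l' => Or a (disjL l') end.
Fixpoint imps (l : list form) (Q : form) : form :=
  match l with [] => Q | P :: l' => Imp P (imps l' Q) end.

Lemma peval_conjL v l : peval v (conjL l) = true <-> forall x, In x l -> peval v x = true.
Proof.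
  induction l; simpl. firstorder.
  rewrite Bool.andb_true_iff, IHl. firstorder congruence.
Qed.

Lemma peval_disjL v l : peval v (disjL l) = true <-> exists x, In x l /\ peval v x = true.
Proof.
  induction l; simpl. split; [discriminate| firstorder].
  rewrite Bool.orb_true_iff, IHl. firstorder congruence.
Qed.

Lemma peval_imps v l Q : peval v (imps l Q) = true <->
  ((forall P, In P l -> peval v P = true) -> peval v Q = true).
Proof.
  induction l; simpl. firstorder.
  destruct (peval v a) eqn:E; simpl; rewrite ?IHl.
  - split; intros H H'.
    + apply H; intros; apply H'; auto.
    + apply H. intros P [<-|HP]; auto.
  - split; intros H.
    + intros H'. assert (peval v a = true) by (apply H'; auto). congruence.
    + reflexivity.
Qed.

Ltac btaut :=
  let vv := fresh "vv" in
  intros vv; unfold Neg, Dia, Iff in *; simpl;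
  repeat match goal with
         | |- context [peval vv ?X] => destruct (peval vv X)
         | |- context [vv ?X] => destruct (vv X)
         end; simpl; intros; try congruence.

Section PT.
Variables j1 j5 : bool.
Notation pv := (prov j1 j5).

Lemma prov_from l Q :
  (forall v, (forall P, In P l -> peval v P = true) -> peval v Q = true) ->
  (forall P, In P l -> pv P) -> pv Q.
Proof.
  intros Hs Hl.
  assert (H : pv (imps l Q)) by (apply ax_taut; intro v; apply peval_imps; apply Hs).
  clear Hs. induction l; simpl in *; auto.
  apply IHl; auto. eapply r_MP; eauto.
Qed.

Lemma mp1 P1 Q : (forall v, peval v P1 = true -> peval v Q = true) -> pv P1 -> pv Q.
Proof. intros Hs H1. apply (prov_from [P1]); [intros v H; apply Hs; apply H; simpl; auto|].
  intros P HP; simpl in HP; intuition subst; auto. Qed.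
Lemma mp2 P1 P2 Q : (forall v, peval v P1 = true -> peval v P2 = true -> peval v Q = true) ->
  pv P1 -> pv P2 -> pv Q.
Proof. intros Hs H1 H2. apply (prov_from [P1;P2]); [intros v H; apply Hs; apply H; simpl; auto|].
  intros P HP; simpl in HP; intuition subst; auto. Qed.
Lemma mp3 P1 P2 P3 Q : (forall v, peval v P1 = true -> peval v P2 = true -> peval v P3 = true -> peval v Q = true) ->
  pv P1 -> pv P2 -> pv P3 -> pv Q.
Proof. intros Hs H1 H2 H3. apply (prov_from [P1;P2;P3]); [intros v H; apply Hs; apply H; simpl; auto|].
  intros P HP; simpl in HP; intuition subst; auto. Qed.
Lemma mp4 P1 P2 P3 P4 Q : (forall v, peval v P1 = true -> peval v P2 = true -> peval v P3 = true -> peval v P4 = true -> peval v Q = true) ->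
  pv P1 -> pv P2 -> pv P3 -> pv P4 -> pv Q.
Proof. intros Hs H1 H2 H3 H4. apply (prov_from [P1;P2;P3;P4]); [intros v H; apply Hs; apply H; simpl; auto|].
  intros P HP; simpl in HP; intuition subst; auto. Qed.
Lemma mp6 P1 P2 P3 P4 P5 P6 Q : (forall v, peval v P1 = true -> peval v P2 = true -> peval v P3 = true -> peval v P4 = true -> peval v P5 = true -> peval v P6 = true -> peval v Q = true) ->
  pv P1 -> pv P2 -> pv P3 -> pv P4 -> pv P5 -> pv P6 -> pv Q.
Proof. intros Hs H1 H2 H3 H4 H5 H6. apply (prov_from [P1;P2;P3;P4;P5;P6]); [intros v H; apply Hs; apply H; simpl; auto 7|].
  intros P HP; simpl in HP; intuition subst; auto. Qed.

Lemma taut P : (forall v, peval v P = true) -> pv P.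
Proof. intros H; apply ax_taut; exact H. Qed.

Lemma box_mono P Q : pv (Imp P Q) -> pv (Imp (Box P) (Box Q)).
Proof. intros H. eapply r_MP; [apply ax_K|]. apply r_Nec, H. Qed.

Lemma box_and P Q : pv (Imp (Box P) (Imp (Box Q) (Box (And P Q)))).
Proof.
  assert (H1 : pv (Imp (Box P) (Box (Imp Q (And P Q))))).
  { apply box_mono. apply taut. btaut. }
  pose proof (ax_K j1 j5 Q (And P Q)).
  revert H1 H. apply mp2. btaut.
Qed.

Lemma four P : pv (Imp (Box P) (Box (Box P))).
Proof.
  set (Bq := And (Box P) P).
  assert (H1 : pv (Imp (Box Bq) (Box P))) by (apply box_mono; apply taut; unfold Bq; btaut).
  assert (H2 : pv (Imp (Box Bq) (Box (Box P)))) by (apply box_mono; apply taut; unfold Bq; btaut).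
  assert (H3 : pv (Imp P (Imp (Box Bq) Bq))) by (revert H1; apply mp1; unfold Bq; btaut).
  assert (H4 := box_mono _ _ H3).
  pose proof (ax_L j1 j5 Bq).
  revert H4 H H2. apply mp3. btaut.
Qed.

Lemma imp_conj P l : (forall x, In x l -> pv (Imp P x)) -> pv (Imp P (conjL l)).
Proof.
  induction l; intros H; simpl.
  - apply taut; btaut.
  - assert (Ha : pv (Imp P a)) by (apply H; simpl; auto).
    assert (Hl : pv (Imp P (conjL l))) by (apply IHl; intros; apply H; simpl; auto).
    revert Ha Hl; apply mp2; btaut.
Qed.

Lemma imp_box_conj P l : (forall x, In x l -> pv (Imp P (Box x))) -> pv (Imp P (Box (conjL l))).
Proof.
  induction l; intros H; simpl.
  - assert (pv (Box Top)) by (apply r_Nec; apply taut; btaut).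
    revert H0; apply mp1; btaut.
  - assert (Ha : pv (Imp P (Box a))) by (apply H; simpl; auto).
    assert (Hl : pv (Imp P (Box (conjL l)))) by (apply IHl; intros; apply H; simpl; auto).
    pose proof (box_and a (conjL l)).
    revert Ha Hl H0; apply mp3; btaut.
Qed.

Lemma rhd_bot R : pv (Rhd Bot R).
Proof.
  pose proof (ax_J6 j1 j5 Bot).
  assert (pv (Box (Neg Bot))) by (apply r_Nec; apply taut; btaut).
  assert (pv (Imp (Rhd Bot Bot) (Rhd Bot R))) by (apply r_R1; apply taut; btaut).
  revert H H0 H1; apply mp3; btaut.
Qed.

Lemma imp_rhd_disj P l R : (forall x, In x l -> pv (Imp P (Rhd x R))) -> pv (Imp P (Rhd (disjL l) R)).
Proof.
  induction l; intros H; simpl.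
  - pose proof (rhd_bot R). revert H0; apply mp1; btaut.
  - assert (Ha : pv (Imp P (Rhd a R))) by (apply H; simpl; auto).
    assert (Hl : pv (Imp P (Rhd (disjL l) R))) by (apply IHl; intros; apply H; simpl; auto).
    pose proof (ax_J3 j1 j5 a (disjL l) R).
    revert Ha Hl H0; apply mp3; btaut.
Qed.

Lemma LM P Q R : pv (Imp (Box (Imp P Q)) (Imp (Rhd Q R) (Rhd P R))).
Proof.
  set (X := And P (Neg Q)).
  assert (h1 : pv (Imp (Rhd Q R) (Rhd (And P Q) R))) by (apply r_R2; apply taut; btaut).
  assert (h2 : pv (Imp (Box (Imp P Q)) (Box (Neg X)))) by (apply box_mono; apply taut; unfold X; btaut).
  pose proof (ax_J6 j1 j5 X) as h3.
  assert (h4 : pv (Imp (Rhd X Bot) (Rhd X R))) by (apply r_R1; apply taut; btaut).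
  pose proof (ax_J3 j1 j5 (And P Q) X R) as h5.
  assert (h6 : pv (Imp (Rhd (Or (And P Q) X) R) (Rhd P R))) by (apply r_R2; apply taut; unfold X; btaut).
  revert h1 h2 h3 h4 h5 h6; apply mp6; btaut.
Qed.

End PT.


Definition form_eq_dec : forall x y : form, {x = y} + {x <> y}.
Proof. decide equality; apply PeanoNat.Nat.eq_dec. Defined.

Fixpoint sub (A : form) : list form :=
  A :: match A with
       | Imp B C | Or B C | And B C | Rhd B C => sub B ++ sub C
       | Box B => sub B
       | _ => []
       end.

Lemma sub_refl A : In A (sub A).
Proof. destruct A; simpl; auto. Qed.

Lemma sub_trans A B C : In B (sub A) -> In C (sub B) -> In C (sub A).
Proof.
  induction A; simpl; intros H1 H2; destruct H1 as [<-|H1]; simpl in H2; auto; try contradiction;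
  try (apply in_app_or in H1; destruct H1; right; apply in_or_app; eauto).
Qed.

Fixpoint subs {T} (l : list T) : list (list T) :=
  match l with [] => [[]] | a :: l' => map (cons a) (subs l') ++ subs l' end.

Lemma subs_filter {T} (f : T -> bool) l : In (filter f l) (subs l).
Proof.
  induction l; simpl; auto. destruct (f a); apply in_or_app; [left; apply in_map|right]; auto.
Qed.

Lemma subs_incl {T} (l G : list T) : In G (subs l) -> forall x, In x G -> In x l.
Proof.
  revert G; induction l; simpl; intros G H x Hx.
  - destruct H as [<-|[]]; destruct Hx.
  - apply in_app_or in H; destruct H as [H|H].
    + apply in_map_iff in H; destruct H as [G' [<- HG']]. destruct Hx as [<-|Hx]; auto. right; eauto.
    + right; eauto.
Qed.

Definition inb (x : form) (l : list form) : bool := if in_dec form_eq_dec x l then true else false.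
Lemma inb_iff x l : inb x l = true <-> In x l.
Proof. unfold inb; destruct in_dec; split; auto; discriminate. Qed.

Definition Negs (G : list form) := conjL (map Neg G).
Lemma peval_Negs v G : peval v (Negs G) = negb (peval v (disjL G)).
Proof. induction G; simpl; auto. unfold Negs in *; simpl. rewrite IHG. destruct (peval v a); auto. Qed.

Definition litf (f : form -> bool) (L : list form) : form :=
  conjL (map (fun p => if f p then p else Neg p) L).
Lemma peval_litf v f L : peval v (litf f L) = true <-> forall p, In p L -> peval v p = f p.
Proof.
  unfold litf. rewrite peval_conjL. split.
  - intros H p Hp. specialize (H _ (in_map _ _ _ Hp)). cbv beta in H. destruct (f p); unfold Neg in *; simpl in *; auto.
    destruct (peval v p); auto.
  - intros H x Hx. apply in_map_iff in Hx. destruct Hx as [p [<- Hp]]. specialize (H p Hp).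
    destruct (f p); unfold Neg; simpl; rewrite H; auto.
Qed.

Definition bxs (l : list form) : list form :=
  flat_map (fun p => match p with Box E => [E] | _ => [] end) l.
Lemma in_bxs E l : In E (bxs l) <-> In (Box E) l.
Proof.
  unfold bxs; rewrite in_flat_map; split.
  - intros [p [Hp HE]]. destruct p; simpl in HE; try contradiction. destruct HE as [<-|[]]; auto.
  - intros H; exists (Box E); simpl; auto.
Qed.

Section Comp.
Variables (j1 j5 : bool) (A0 : form).
Notation pv := (prov j1 j5).

Definition Rh : list (form * form) :=
  flat_map (fun p => match p with Rhd B C => [(B, C)] | _ => [] end) (sub A0).
Lemma in_Rh B C : In (B, C) Rh <-> In (Rhd B C) (sub A0).
Proof.
  unfold Rh; rewrite in_flat_map; split.
  - intros [p [Hp HE]]. destruct p; simpl in HE; try contradiction. destruct HE as [E|[]]; inversion E; subst; auto.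
  - intros H; exists (Rhd B C); simpl; auto.
Qed.

Definition Ants := map fst Rh.

Definition chi B C G :=
  And B (And (Negs G) (And (if j1 then Neg C else Top) (if j5 then Box (Neg C) else Top))).

Definition roots : list form :=
  A0 :: flat_map (fun p => Box (Neg (fst p)) :: Box (Neg (snd p)) ::
                   map (fun q => Box (Neg (And (snd q) (Neg (snd p))))) Rh ++
                   map (fun G => Box (Neg (chi (fst p) (snd p) G))) (subs Ants)) Rh.

Definition Phi := flat_map sub roots.

Lemma Phi_closed p q : In p Phi -> In q (sub p) -> In q Phi.
Proof.
  unfold Phi; rewrite !in_flat_map. intros [r [Hr Hp]] Hq. exists r; split; auto. eapply sub_trans; eauto.
Qed.

Lemma Phi_root r : In r roots -> In r Phi.
Proof. intros H; unfold Phi; apply in_flat_map; exists r; split; auto; apply sub_refl. Qed.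

Lemma Phi_A0 : In A0 Phi.
Proof. apply Phi_root; simpl; auto. Qed.

Lemma Phi_subA0 p : In p (sub A0) -> In p Phi.
Proof. intros H. eapply Phi_closed; [apply Phi_A0|auto]. Qed.

Lemma Phi_rh_root B C r : In (B, C) Rh ->
  (r = Box (Neg B) \/ r = Box (Neg C) \/
   (exists q, In q Rh /\ r = Box (Neg (And (snd q) (Neg C)))) \/
   (exists G, In G (subs Ants) /\ r = Box (Neg (chi B C G)))) -> In r Phi.
Proof.
  intros HBC Hr. apply Phi_root. right. apply in_flat_map. exists (B, C); split; auto. simpl.
  destruct Hr as [->|[->|[[q [Hq ->]]|[G [HG ->]]]]]; auto.
  - right; right; apply in_or_app; left; apply in_map_iff; exists q; auto.
  - right; right; apply in_or_app; right; apply in_map_iff; exists G; auto.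
Qed.

Definition noR (p : form) := forall B C, In (Rhd B C) (sub p) -> In (Rhd B C) (sub A0).
Lemma noR_sub p : In p (sub A0) -> noR p.
Proof. intros H B C H'; eapply sub_trans; eauto. Qed.
Lemma noR_Box p : noR p -> noR (Box p).
Proof. intros H B C [E|H']; [discriminate|auto]. Qed.
Lemma noR_Imp p q : noR p -> noR q -> noR (Imp p q).
Proof. intros H1 H2 B C [E|H']; [discriminate|]. apply in_app_or in H'; destruct H'; auto. Qed.
Lemma noR_And p q : noR p -> noR q -> noR (And p q).
Proof. intros H1 H2 B C [E|H']; [discriminate|]. apply in_app_or in H'; destruct H'; auto. Qed.
Lemma noR_Top : noR Top.
Proof. intros B C [E|[]]; discriminate. Qed.
Lemma noR_Bot : noR Bot.
Proof. intros B C [E|[]]; discriminate. Qed.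
Lemma noR_Neg p : noR p -> noR (Neg p).
Proof. intros; apply noR_Imp; auto; apply noR_Bot. Qed.
Lemma noR_Negs G : (forall x, In x G -> noR x) -> noR (Negs G).
Proof.
  induction G; intros H; unfold Negs; simpl. apply noR_Top.
  apply noR_And. apply noR_Neg; apply H; simpl; auto. apply IHG; intros; apply H; simpl; auto.
Qed.

Lemma Rh_sub B C : In (B, C) Rh -> In B (sub A0) /\ In C (sub A0).
Proof.
  intros H; apply in_Rh in H. split; eapply sub_trans; eauto; simpl; right; apply in_or_app; [left|right]; apply sub_refl.
Qed.

Lemma Phi_Rhd B C : In (Rhd B C) Phi -> In (B, C) Rh.
Proof.
  intros H. apply in_Rh. unfold Phi in H; apply in_flat_map in H. destruct H as [r [Hr H]].
  revert B C H. change (noR r).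
  destruct Hr as [<-|Hr]. { apply noR_sub, sub_refl. }
  apply in_flat_map in Hr. destruct Hr as [[B C] [HBC Hr]]. simpl in Hr.
  destruct (Rh_sub _ _ HBC) as [HB HC].
  destruct Hr as [<-|[<-|Hr]].
  - apply noR_Box, noR_Neg, noR_sub; auto.
  - apply noR_Box, noR_Neg, noR_sub; auto.
  - apply in_app_or in Hr; destruct Hr as [Hr|Hr]; apply in_map_iff in Hr.
    + destruct Hr as [[B' C'] [<- Hq]]. destruct (Rh_sub _ _ Hq). simpl.
      apply noR_Box, noR_Neg, noR_And; [apply noR_sub; auto|apply noR_Neg, noR_sub; auto].
    + destruct Hr as [G [<- HG]]. apply noR_Box, noR_Neg. unfold chi.
      apply noR_And; [apply noR_sub; auto|]. apply noR_And.
      * apply noR_Negs. intros x Hx. pose proof (subs_incl _ _ HG x Hx) as Hx'.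
        unfold Ants in Hx'. apply in_map_iff in Hx'. destruct Hx' as [[x' y'] [<- Hxy]].
        apply noR_sub. apply (Rh_sub _ _ Hxy).
      * apply noR_And; [destruct j1|destruct j5]; try apply noR_Top.
        apply noR_Neg, noR_sub; auto. apply noR_Box, noR_Neg, noR_sub; auto.
Qed.

Lemma Phi_Imp p q : In (Imp p q) Phi -> In p Phi /\ In q Phi.
Proof. intros H; split; eapply Phi_closed; eauto; simpl; right; apply in_or_app; [left|right]; apply sub_refl. Qed.
Lemma Phi_And p q : In (And p q) Phi -> In p Phi /\ In q Phi.
Proof. intros H; split; eapply Phi_closed; eauto; simpl; right; apply in_or_app; [left|right]; apply sub_refl. Qed.
Lemma Phi_Or p q : In (Or p q) Phi -> In p Phi /\ In q Phi.
Proof. intros H; split; eapply Phi_closed; eauto; simpl; right; apply in_or_app; [left|right]; apply sub_refl. Qed.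
Lemma Phi_Rhd2 p q : In (Rhd p q) Phi -> In p Phi /\ In q Phi.
Proof. intros H; split; eapply Phi_closed; eauto; simpl; right; apply in_or_app; [left|right]; apply sub_refl. Qed.
Lemma Phi_Box p : In (Box p) Phi -> In p Phi.
Proof. intros H; eapply Phi_closed; eauto; simpl; right; apply sub_refl. Qed.

Definition cons_ (p : form) := ~ pv (Neg p).
Definition lit (D : list form) := litf (fun p => inb p D) Phi.
Definition atom (D : list form) := (exists f, D = filter f Phi) /\ cons_ (lit D).

Lemma atom_sub D p : atom D -> In p D -> In p Phi.
Proof. intros [[f ->] _] H. apply filter_In in H; tauto. Qed.

Lemma atom_val D : atom D -> exists v, forall p, In p Phi -> (In p D <-> peval v p = true).
Proof.
  intros [HD Hc].
  destruct (classic (exists v, peval v (lit D) = true)) as [[v Hv]|Hn].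
  - exists v. intros p Hp. unfold lit in Hv. rewrite peval_litf in Hv. rewrite (Hv p Hp).
    rewrite inb_iff; tauto.
  - exfalso. apply Hc. apply taut. intros v. simpl. destruct (peval v (lit D)) eqn:E; auto.
    exfalso; apply Hn; eauto.
Qed.

Lemma cons_weak X Y : (forall v, peval v Y = true -> peval v X = true) -> cons_ Y -> cons_ X.
Proof.
  intros Hs HY H. apply HY. revert H; apply mp1. intros v; simpl.
  specialize (Hs v). destruct (peval v Y), (peval v X); simpl; auto.
Qed.

Lemma lind_gen L : forall p, cons_ p -> exists f, cons_ (And p (litf f L)).
Proof.
  induction L as [|q L IH]; intros p Hp.
  - exists (fun _ => true). revert Hp; apply cons_weak. intros v; simpl. intros ->; auto.
  - assert (Hb : exists b : bool, cons_ (And p (if b then q else Neg q))).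
    { destruct (classic (cons_ (And p q))) as [H|H]; [exists true; auto|].
      destruct (classic (cons_ (And p (Neg q)))) as [H'|H']; [exists false; auto|].
      exfalso. unfold cons_ in *. apply NNPP in H, H'. apply Hp. revert H H'; apply mp2; btaut. }
    destruct Hb as [b Hb]. destruct (IH _ Hb) as [f Hf].
    exists (fun x => if form_eq_dec x q then b else f x).
    revert Hf; apply cons_weak. intros v Hv. simpl in Hv.
    apply Bool.andb_true_iff in Hv; destruct Hv as [Hv1 Hv3].
    apply Bool.andb_true_iff in Hv1; destruct Hv1 as [Hv1 Hv2].
    assert (Hq : peval v q = b) by (destruct b; simpl in Hv2; auto; destruct (peval v q); auto).
    change (andb (peval v p) (peval v (litf (fun x => if form_eq_dec x q then b else f x) (q::L))) = true).
    rewrite Hv1, Bool.andb_true_l. apply peval_litf. intros x Hx.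
    destruct (form_eq_dec x q) as [->|Hne]; auto.
    destruct Hx as [<-|Hx]; [congruence|]. rewrite peval_litf in Hv3. auto.
Qed.

Lemma lind p : cons_ p -> exists D, atom D /\ cons_ (And p (lit D)).
Proof.
  intros Hp. destruct (lind_gen Phi p Hp) as [f Hf].
  assert (E : lit (filter f Phi) = litf f Phi).
  { unfold lit, litf. f_equal. apply map_ext_in. intros x Hx.
    assert (inb x (filter f Phi) = f x).
    { destruct (f x) eqn:Ef; [apply inb_iff; apply filter_In; auto|].
      destruct (inb x (filter f Phi)) eqn:Ei; auto. apply inb_iff, filter_In in Ei. destruct Ei; congruence. }
    rewrite H; auto. }
  exists (filter f Phi). rewrite E. split; auto. split; [eauto|].
  rewrite E. revert Hf; apply cons_weak. intros v Hv. change (andb (peval v p) (peval v (litf f Phi)) = true) in Hv.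
  apply Bool.andb_true_iff in Hv; tauto.
Qed.

Lemma lind_mem p D q : cons_ (And p (lit D)) -> In q Phi ->
  (forall v, peval v p = true -> peval v q = true) -> In q D.
Proof.
  intros Hc Hq Hs. apply NNPP; intros Hn. apply Hc. apply taut. intros v; simpl.
  destruct (peval v p) eqn:Ep; simpl; auto.
  destruct (peval v (lit D)) eqn:El; simpl; auto.
  unfold lit in El; rewrite peval_litf in El. specialize (El q Hq). specialize (Hs v Ep).
  destruct (inb q D) eqn:Ei. apply inb_iff in Ei; contradiction. congruence.
Qed.

Lemma lind_nmem p D q : cons_ (And p (lit D)) -> In q Phi ->
  (forall v, peval v p = true -> peval v q = false) -> ~ In q D.
Proof.
  intros Hc Hq Hs Hin. apply Hc. apply taut. intros v; simpl.
  destruct (peval v p) eqn:Ep; simpl; auto.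
  destruct (peval v (lit D)) eqn:El; simpl; auto.
  unfold lit in El; rewrite peval_litf in El. specialize (El q Hq). specialize (Hs v Ep).
  apply inb_iff in Hin. congruence.
Qed.

Lemma lit_mem D q : In q D -> In q Phi -> pv (Imp (lit D) q).
Proof.
  intros H Hq. apply taut; intros v; simpl. destruct (peval v (lit D)) eqn:El; simpl; auto.
  unfold lit in El; rewrite peval_litf in El. rewrite (El q Hq). apply inb_iff; auto.
Qed.

Lemma mem_prov D q : atom D -> In q Phi -> pv (Imp (lit D) q) -> In q D.
Proof.
  intros [_ Hc] Hq H. apply NNPP; intros Hn. apply Hc. revert H; apply mp1. intros v; simpl.
  destruct (peval v (lit D)) eqn:El; simpl; auto.
  unfold lit in El; rewrite peval_litf in El. rewrite (El q Hq).
  destruct (inb q D) eqn:Ei; auto. apply inb_iff in Ei; contradiction.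
Qed.

End Comp.


Section Comp2.
Variables (j1 j5 : bool) (A0 : form).
Notation pv := (prov j1 j5).
Notation Phi := (Phi j1 j5 A0).
Notation atom := (atom j1 j5 A0).
Notation lit := (lit j1 j5 A0).
Notation Rh := (Rh A0).
Notation Ants := (Ants A0).
Notation chi := (chi j1 j5).
Notation cons_ := (cons_ j1 j5).

Definition Rel (G D : list form) : Prop :=
  (forall E, In (Box E) G -> In E D /\ In (Box E) D) /\
  (exists E, In (Box E) D /\ ~ In (Box E) G).

Lemma Rel_trans a b c : Rel a b -> Rel b c -> Rel a c.
Proof.
  intros [H1 [E [HE1 HE2]]] [H2 [F [HF1 HF2]]]. split.
  - intros X HX. apply H2. apply H1; auto.
  - exists E. split; auto. apply H2; auto.
Qed.

Definition Bx (G : list form) := conjL (map (fun E => And E (Box E)) (bxs G)).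

Lemma Bx_val v G E : peval v (Bx G) = true -> In (Box E) G ->
  peval v E = true /\ peval v (Box E) = true.
Proof.
  intros H HE. unfold Bx in H. rewrite peval_conjL in H.
  assert (HE' : In (And E (Box E)) (map (fun X => And X (Box X)) (bxs G))).
  { apply (in_map (fun X => And X (Box X))). apply in_bxs; auto. }
  specialize (H _ HE'). simpl in H. apply Bool.andb_true_iff in H. auto.
Qed.

Lemma lit_Bx G : atom G -> pv (Imp (lit G) (Box (Bx G))).
Proof.
  intros HG. apply imp_box_conj. intros x Hx. apply in_map_iff in Hx.
  destruct Hx as [E [<- HE]]. apply in_bxs in HE.
  pose proof (lit_mem j1 j5 A0 G (Box E) HE (atom_sub _ _ _ _ _ HG HE)) as h1.
  pose proof (four j1 j5 E) as h2. pose proof (box_and j1 j5 E (Box E)) as h3.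
  revert h1 h2 h3; apply mp3; btaut.
Qed.

Lemma E0 G D : atom G -> In (Box D) Phi -> ~ In (Box D) G ->
  exists T, atom T /\ Rel G T /\ ~ In D T.
Proof.
  intros HG HD Hn.
  set (p := And (Bx G) (And (Box D) (Neg D))).
  assert (Hc : cons_ p).
  { intros H. apply Hn. apply (mem_prov j1 j5 A0); auto.
    assert (h1 : pv (Imp (Bx G) (Imp (Box D) D))) by (revert H; apply mp1; unfold p; btaut).
    pose proof (box_mono j1 j5 _ _ h1) as h2. pose proof (ax_L j1 j5 D) as h3.
    pose proof (lit_Bx G HG) as h4. revert h2 h3 h4; apply mp3; btaut. }
  destruct (lind j1 j5 A0 p Hc) as [T [HT Hc']]. exists T. split; auto.
  assert (HDP : In D Phi) by (apply Phi_Box; auto).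
  split; [split|].
  - intros E HE. pose proof (atom_sub j1 j5 A0 G (Box E) HG HE) as HEP.
    assert (HEP' : In E Phi) by (apply Phi_Box; auto).
    split; [apply (lind_mem j1 j5 A0 p T E Hc' HEP')|apply (lind_mem j1 j5 A0 p T (Box E) Hc' HEP)];
      intros v Hv; unfold p in Hv; simpl in Hv; apply Bool.andb_true_iff in Hv;
      destruct (Bx_val v G E (proj1 Hv) HE); auto.
  - exists D. split; auto. apply (lind_mem j1 j5 A0 p T (Box D) Hc' HD). intros v Hv; unfold p, Neg in *; simpl in *.
    destruct (peval v (Bx G)), (v (Box D)); simpl in *; auto.
  - apply (lind_nmem j1 j5 A0 p T D Hc' HDP). intros v Hv; unfold p, Neg in *; simpl in *.
    destruct (peval v (Bx G)), (v (Box D)), (peval v D); simpl in *; auto.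
Qed.

Lemma E1 G D B C : atom G -> atom D -> Rel G D -> In (Rhd B C) G -> In B D ->
  exists T, atom T /\ Rel G T /\ In C T.
Proof.
  intros HG HD HR HBC HB.
  pose proof (Phi_Rhd j1 j5 A0 B C (atom_sub j1 j5 A0 G _ HG HBC)) as HRh.
  pose proof (Phi_rh_root j1 j5 A0 B C _ HRh (or_introl eq_refl)) as HnB.
  pose proof (Phi_rh_root j1 j5 A0 B C _ HRh (or_intror (or_introl eq_refl))) as HnC.
  destruct (classic (In (Box (Neg C)) G)) as [H|H].
  - exfalso.
    assert (HB' : In (Box (Neg B)) G).
    { apply (mem_prov j1 j5 A0); auto.
      pose proof (lit_mem j1 j5 A0 G _ H HnC) as h1.
      pose proof (lit_mem j1 j5 A0 G _ HBC (atom_sub _ _ _ _ _ HG HBC)) as h2.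
      pose proof (ax_J4p j1 j5 C Bot B) as h3.
      pose proof (ax_J6 j1 j5 B) as h4.
      revert h1 h2 h3 h4; apply mp4; btaut. }
    destruct HR as [HR _]. destruct (HR _ HB') as [HnBD _].
    destruct (atom_val _ _ _ _ HD) as [v Hv].
    assert (HBP : In (Neg B) Phi) by (apply Phi_Box; auto).
    apply Hv in HnBD; auto. apply Hv in HB; [|apply (Phi_Imp _ _ _ _ _ HBP)].
    unfold Neg in HnBD; simpl in HnBD. rewrite HB in HnBD. discriminate.
  - destruct (E0 G (Neg C) HG HnC H) as [T [HT [HR' Hn]]]. exists T; split; auto; split; auto.
    destruct (atom_val _ _ _ _ HT) as [v Hv].
    assert (HCP : In (Neg C) Phi) by (apply Phi_Box; auto).
    assert (HCP' : In C Phi) by (apply (Phi_Imp _ _ _ _ _ HCP)).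
    apply Hv; auto. destruct (peval v C) eqn:E; auto. exfalso; apply Hn. apply Hv; auto.
    unfold Neg; simpl; rewrite E; auto.
Qed.

Lemma E1' G B' C' B C : atom G -> In (B', C') Rh -> In (B, C) Rh ->
  ~ In (Box (Neg (And C' (Neg C)))) G ->
  exists T, atom T /\ Rel G T /\ In C' T /\ ~ In C T.
Proof.
  intros HG H1 H2 Hn.
  assert (HP : In (Box (Neg (And C' (Neg C)))) Phi).
  { apply (Phi_rh_root j1 j5 A0 B C _ H2). right; right; left. exists (B', C'); auto. }
  destruct (E0 G _ HG HP Hn) as [T [HT [HR Hn']]]. exists T. split; auto; split; auto.
  destruct (atom_val _ _ _ _ HT) as [v Hv].
  assert (P1 : In (Neg (And C' (Neg C))) Phi) by (apply Phi_Box; auto).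
  assert (P2 : In (And C' (Neg C)) Phi) by (apply (Phi_Imp _ _ _ _ _ P1)).
  destruct (Phi_And _ _ _ _ _ P2) as [P3 P4].
  assert (P5 : In C Phi) by (apply (Phi_Imp _ _ _ _ _ P4)).
  assert (Hf : peval v (Neg (And C' (Neg C))) = false).
  { destruct (peval v (Neg (And C' (Neg C)))) eqn:E; auto. exfalso; apply Hn'; apply Hv; auto. }
  unfold Neg in Hf; simpl in Hf.
  destruct (peval v C') eqn:E1, (peval v C) eqn:E2; simpl in Hf; try discriminate.
  split; [apply Hv; auto|]. intros Hc. apply Hv in Hc; auto. congruence.
Qed.

Definition tagok (G D : list form) (C : form) : Prop :=
  (forall B' C', In (Rhd B' C') G -> In B' D ->
     exists T, atom T /\ Rel G T /\ In C' T /\ ~ In C T) /\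
  (j1 = true -> ~ In C D) /\ (j5 = true -> In (Box (Neg C)) D).


Lemma chi_sem v B C GG : peval v (Neg (chi B C GG)) = true -> peval v B = true ->
  peval v (Or (disjL GG) (Or (if j1 then C else Bot) (if j5 then Dia C else Bot))) = true.
Proof.
  unfold chi, Neg, Dia. intros H1 H2. cbn [peval] in *. rewrite peval_Negs in H1. rewrite H2 in *.
  destruct j1, j5; cbn [peval] in *; unfold Neg in *; cbn [peval] in *;
  destruct (peval v (disjL GG)), (peval v C), (v (Box (Imp C Bot))); simpl in *; auto.
Qed.

Lemma E2 G B C : atom G -> In (B, C) Rh -> ~ In (Rhd B C) G ->
  exists D, atom D /\ Rel G D /\ In B D /\ tagok G D C.
Proof.
  intros HG HRh Hn.
  set (fG := fun B' => if excluded_middle_informative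
        (exists Y, In (Rhd B' Y) G /\ In (Box (Neg (And Y (Neg C)))) G) then true else false).
  set (GG := filter fG Ants).
  set (X := chi B C GG).
  assert (HX : In (Box (Neg X)) Phi).
  { apply (Phi_rh_root j1 j5 A0 B C _ HRh). right; right; right. exists GG. split; auto. apply subs_filter. }
  assert (HBCP : In (Rhd B C) Phi) by (apply Phi_subA0; apply in_Rh; auto).
  destruct (classic (In (Box (Neg X)) G)) as [H|H].
  - exfalso. apply Hn. apply (mem_prov j1 j5 A0); auto.
    set (e1 := if j1 then C else Bot). set (e5 := if j5 then Dia C else Bot).
    set (T := Or (disjL GG) (Or e1 e5)).
    pose proof (lit_mem j1 j5 A0 G _ H HX) as a.
    assert (b : pv (Imp (Box (Neg X)) (Box (Imp B T)))).
    { apply box_mono. apply taut. intros v. change (implb (peval v (Neg X)) (implb (peval v B) (peval v T)) = true).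
      pose proof (chi_sem v B C GG). fold X e1 e5 T in H0.
      destruct (peval v (Neg X)), (peval v B), (peval v T); simpl; auto. }
    assert (c1 : pv (Imp (lit G) (Rhd (disjL GG) C))).
    { apply imp_rhd_disj. intros x Hx. unfold GG in Hx. apply filter_In in Hx. destruct Hx as [_ Hf].
      unfold fG in Hf. destruct (excluded_middle_informative _) as [[Y [HY1 HY2]]|_]; [|discriminate].
      pose proof (lit_mem j1 j5 A0 G _ HY1 (atom_sub _ _ _ _ _ HG HY1)) as h1.
      pose proof (lit_mem j1 j5 A0 G _ HY2 (atom_sub _ _ _ _ _ HG HY2)) as h2.
      assert (h3 : pv (Imp (Box (Neg (And Y (Neg C)))) (Box (Imp Y C)))) by (apply box_mono; apply taut; btaut).
      pose proof (ax_J4p j1 j5 Y C x) as h4.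
      revert h1 h2 h3 h4; apply mp4; btaut. }
    assert (c2 : pv (Imp (lit G) (Rhd e1 C))).
    { unfold e1. destruct (Bool.bool_dec j1 true) as [Ej|Ej].
      - replace (if j1 then C else Bot) with C by (rewrite Ej; reflexivity). pose proof (ax_J1 j1 j5 C C Ej) as h1.
        assert (h2 : pv (Box (Imp C C))) by (apply r_Nec; apply taut; btaut).
        revert h1 h2; apply mp2; btaut.
      - replace (if j1 then C else Bot) with Bot by (destruct j1; congruence).
        pose proof (rhd_bot j1 j5 C) as h; revert h; apply mp1; btaut. }
    assert (c3 : pv (Imp (lit G) (Rhd e5 C))).
    { unfold e5. destruct (Bool.bool_dec j5 true) as [Ej|Ej].
      - replace (if j5 then Dia C else Bot) with (Dia C) by (rewrite Ej; reflexivity).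
        pose proof (ax_J5 j1 j5 C Ej) as h; revert h; apply mp1; btaut.
      - replace (if j5 then Dia C else Bot) with Bot by (destruct j5; congruence).
        pose proof (rhd_bot j1 j5 C) as h; revert h; apply mp1; btaut. }
    assert (c4 : pv (Imp (lit G) (Rhd (Or e1 e5) C))).
    { pose proof (ax_J3 j1 j5 e1 e5 C) as h. revert c2 c3 h; apply mp3; btaut. }
    assert (c5 : pv (Imp (lit G) (Rhd T C))).
    { pose proof (ax_J3 j1 j5 (disjL GG) (Or e1 e5) C) as h. unfold T. revert c1 c4 h; apply mp3; btaut. }
    pose proof (LM j1 j5 B T C) as d.
    revert a b c5 d; apply mp4; btaut.
  - destruct (E0 G (Neg X) HG HX H) as [D [HD [HR HnX]]]. exists D.
    destruct (atom_val _ _ _ _ HD) as [v Hv].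
    assert (P1 : In (Neg X) Phi) by (apply Phi_Box; auto).
    assert (P2 : In X Phi) by (apply (Phi_Imp _ _ _ _ _ P1)).
    destruct (Phi_And _ _ _ _ _ P2) as [PB P3].
    destruct (Phi_And _ _ _ _ _ P3) as [PN P4].
    assert (HXv : peval v X = true).
    { destruct (peval v X) eqn:E; auto. exfalso; apply HnX; apply Hv; auto. change (implb (peval v X) false = true); rewrite E; auto. }
    unfold X, chi in HXv. cbn [peval] in HXv.
    apply Bool.andb_true_iff in HXv; destruct HXv as [HvB HXv].
    apply Bool.andb_true_iff in HXv; destruct HXv as [HvN HXv].
    apply Bool.andb_true_iff in HXv; destruct HXv as [Hv1 Hv5].
    rewrite peval_Negs in HvN.
    split; auto. split; auto. split; [apply Hv; auto|].
    split; [|split].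
    + intros B' C' H1 H2.
      pose proof (atom_sub _ _ _ _ _ HG H1) as HP'.
      pose proof (Phi_Rhd j1 j5 A0 B' C' HP') as HRh'.
      destruct (Phi_Rhd2 _ _ _ _ _ HP') as [PB' _].
      apply (E1' G B' C' B C HG HRh' HRh). intros Hin.
      assert (HG' : In B' GG).
      { unfold GG. apply filter_In. split.
        - unfold Ants. apply (in_map fst _ (B', C')); auto.
        - unfold fG. destruct (excluded_middle_informative _) as [_|Hn']; auto.
          exfalso; apply Hn'; exists C'; auto. }
      assert (peval v (disjL GG) = true) by (apply peval_disjL; exists B'; split; auto; apply Hv; auto).
      rewrite H0 in HvN; discriminate.
    + intros Ej. rewrite Ej in Hv1. unfold Neg in Hv1; simpl in Hv1. intros HC.
      assert (HCP : In C Phi) by (apply (Phi_subA0 j1 j5 A0); apply (Rh_sub _ _ _ HRh)).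
      apply Hv in HC; auto. rewrite HC in Hv1. discriminate.
    + intros Ej. rewrite Ej in Hv5. apply Hv; auto.
      apply (Phi_rh_root j1 j5 A0 B C _ HRh (or_intror (or_introl eq_refl))).
Qed.

End Comp2.


Lemma finite_sig {T : Type} (P : T -> Prop) (l : list T) :
  (forall x, P x -> In x l) -> finite_type {x | P x}.
Proof.
  intros H.
  exists (flat_map (fun t => match excluded_middle_informative (P t) with
                             | left Ht => [exist P t Ht] | right _ => [] end) l).
  intros [x Hx]. apply in_flat_map. exists x. split; auto.
  destruct (excluded_middle_informative (P x)) as [H'|H']; [|contradiction].
  left. f_equal. apply proof_irrelevance.
Qed.

Fixpoint lists_upto {T} (n : nat) (X : list T) : list (list T) :=
  match n with
  | 0 => [[]]
  | S n' => [] :: flat_map (fun a => map (cons a) (lists_upto n' X)) X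
  end.

Lemma lists_upto_in {T} n (X : list T) l : length l <= n -> (forall a, In a l -> In a X) -> In l (lists_upto n X).
Proof.
  revert l; induction n; intros l Hl HX; simpl.
  - destruct l; simpl in *; [auto|lia].
  - destruct l as [|a l]; [left; auto|right]. apply in_flat_map. exists a. split; [apply HX; simpl; auto|].
    apply in_map. apply IHn; simpl in *; [lia|]. intros; apply HX; simpl; auto.
Qed.

Lemma filter_le {T} (P Q : T -> bool) l : (forall x, In x l -> P x = true -> Q x = true) ->
  length (filter P l) <= length (filter Q l).
Proof.
  induction l; simpl; intros H; auto.
  destruct (P a) eqn:Ea, (Q a) eqn:Eb; simpl.
  - apply le_n_S, IHl; auto.
  - rewrite (H a (or_introl eq_refl) Ea) in Eb; discriminate.
  - apply le_S, IHl; auto.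
  - apply IHl; auto.
Qed.

Lemma filter_lt {T} (P Q : T -> bool) l : (forall x, In x l -> P x = true -> Q x = true) ->
  (exists x, In x l /\ Q x = true /\ P x = false) ->
  length (filter P l) < length (filter Q l).
Proof.
  induction l; simpl; intros H [x [Hx [HQ HP]]]; [contradiction|].
  destruct Hx as [<-|Hx].
  - rewrite HQ, HP. simpl. apply le_n_S. apply filter_le; auto.
  - destruct (P a) eqn:Ea, (Q a) eqn:Eb; simpl.
    + apply le_n_S, IHl; eauto.
    + rewrite (H a (or_introl eq_refl) Ea) in Eb; discriminate.
    + apply le_S. apply IHl; eauto.
    + apply IHl; eauto.
Qed.

Section Model.
Variables (j1 j5 : bool) (A0 : form).
Notation pv := (prov j1 j5).
Notation Phi := (Phi j1 j5 A0).
Notation atom := (atom j1 j5 A0).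
Notation lit := (lit j1 j5 A0).
Notation Rh := (Rh A0).
Notation tagok := (tagok j1 j5 A0).

Definition Node := (list form * option form)%type.
Definition cur (p : list Node) : list form := match p with (D, _) :: _ => D | [] => [] end.

Fixpoint valid (p : list Node) : Prop :=
  match p with
  | [] => False
  | (D, t) :: q => atom D /\ (match t with None => True | Some C => In C Phi end) /\
      match q with
      | [] => t = None
      | _ :: _ => valid q /\ Rel (cur q) D /\
                  (match t with None => True | Some C => tagok (cur q) D C end)
      end
  end.

Lemma valid_ne p : valid p -> p <> [].
Proof. destruct p; simpl; [tauto|discriminate]. Qed.

Lemma valid_atom p : valid p -> atom (cur p).
Proof. destruct p as [|[D t] q]; simpl; tauto. Qed.

Lemma valid_tail D t q : valid ((D, t) :: q) -> q <> [] -> valid q /\ Rel (cur q) D.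
Proof. simpl. destruct q; [congruence|]. tauto. Qed.

Lemma valid_tag D C q : valid ((D, Some C) :: q) -> q <> [] /\ tagok (cur q) D C.
Proof. simpl. destruct q; [intros [_ [_ H]]; discriminate|]. intros [_ [_ [_ [_ H]]]]. split; [discriminate|auto]. Qed.

Lemma valid_app e q : valid (e ++ q) -> q <> [] -> valid q.
Proof.
  induction e as [|[D t] e IH]; simpl; auto. intros H Hq.
  apply IH; auto. apply (valid_tail D t); auto. destruct e; simpl; [auto|discriminate].
Qed.

Lemma valid_rel e q : valid (e ++ q) -> e <> [] -> q <> [] -> Rel (cur q) (cur (e ++ q)).
Proof.
  induction e as [|[D t] e IH]; intros H He Hq; [congruence|].
  assert (Hne : e ++ q <> []) by (destruct e; simpl; [auto|discriminate]).
  destruct (valid_tail D t (e ++ q) H Hne) as [Hv HR].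
  destruct e as [|a e'].
  - simpl in *. auto.
  - simpl (cur _). eapply Rel_trans; [apply IH; auto; discriminate|]. exact HR.
Qed.

Lemma valid_child p T : valid p -> atom T -> Rel (cur p) T -> valid ((T, None) :: p).
Proof. intros Hp HT HR. simpl. destruct p; [contradiction|]. tauto. Qed.

Lemma valid_tchild p D C : valid p -> atom D -> Rel (cur p) D -> In C Phi -> tagok (cur p) D C ->
  valid ((D, Some C) :: p).
Proof. intros Hp HT HR HC Ht. simpl. destruct p; [contradiction|]. tauto. Qed.

Definition isBox (x : form) : bool := match x with Box _ => true | _ => false end.
Definition cb (D : list form) := length (filter (fun x => andb (isBox x) (inb x D)) Phi).

Lemma cb_lt G D : atom G -> atom D -> Rel G D -> cb G < cb D.
Proof.
  intros HG HD [H1 [E [HE1 HE2]]]. unfold cb. apply filter_lt.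
  - intros x Hx Hb. apply Bool.andb_true_iff in Hb. destruct Hb as [Hb Hi].
    destruct x; try discriminate. apply inb_iff in Hi. apply Bool.andb_true_iff; split; auto.
    apply inb_iff. apply H1; auto.
  - exists (Box E). split; [eapply atom_sub; eauto|]. simpl. split.
    + apply inb_iff; auto.
    + destruct (inb (Box E) G) eqn:Ei; auto. apply inb_iff in Ei; contradiction.
Qed.

Lemma valid_len p : valid p -> length p <= S (cb (cur p)).
Proof.
  induction p as [|[D t] q IH]; intros H; [destruct H|].
  destruct q as [|a q'].
  - simpl. lia.
  - destruct (valid_tail D t (a :: q') H) as [Hv HR]; [discriminate|].
    pose proof (cb_lt _ _ (valid_atom _ Hv) (proj1 H) HR). specialize (IH Hv).
    simpl in *. lia.
Qed.

Definition Nodes0 : list Node := list_prod (subs Phi) (None :: map Some Phi).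
Definition Enum := lists_upto (S (length Phi)) Nodes0.

Lemma valid_enum p : valid p -> In p Enum.
Proof.
  intros H. apply lists_upto_in.
  - pose proof (valid_len p H). unfold cb in H0. pose proof (filter_length_le (fun x => andb (isBox x) (inb x (cur p))) Phi). lia.
  - clear - H. induction p as [|[D t] q IH]; [contradiction|]. intros a [<-|Ha].
    + unfold Nodes0. apply in_prod_iff. destruct H as [[[f Hf] _] [Ht _]]. split.
      * rewrite Hf. apply subs_filter.
      * destruct t; simpl; auto. right. apply in_map; auto.
    + destruct q as [|b q']; [contradiction|]. apply IH; auto. apply (valid_tail D t); auto; discriminate.
Qed.

Definition W := {p : list Node | valid p}.
Definition strict_suffix (a b : list Node) := exists e, e <> [] /\ b = e ++ a.
Definition RR (x y : W) : Prop := strict_suffix (proj1_sig x) (proj1_sig y).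
Definition core (y z : list Node) : Prop :=
  match y with
  | (_, Some C) :: p => strict_suffix p z -> ~ In C (cur z)
  | _ => True
  end.
Definition SS (x y : W) : Prop :=
  (j1 = true /\ x = y) \/ (j5 = true /\ RR x y) \/ core (proj1_sig x) (proj1_sig y).

Lemma frame_ok : inhabited W -> simplified_L_frame j1 j5 W RR SS.
Proof.
  intros Hi. split; [split; [exact Hi|split]|split].
  - intros [x Hx] [y Hy] [z Hz] [e1 [He1 E1]] [e2 [He2 E2]]. simpl in *.
    exists (e2 ++ e1). split; [destruct e2; simpl; congruence|]. subst. apply app_assoc.
  - apply (well_founded_lt_compat W (fun x => S (length Phi) - length (proj1_sig x))).
    intros [y Hy] [x Hx] [e [He E]]. cbv beta iota delta [proj1_sig RR] in *.
    pose proof (valid_len _ Hy) as H1.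
    assert (H2 : cb (cur y) <= length Phi) by (unfold cb; apply filter_length_le).
    assert (H3 : length y <= S (length Phi)) by lia. clear H1 H2.
    subst. rewrite length_app in *. assert (length e > 0) by (destruct e; [congruence|simpl; lia]). lia.
  - intros Ej x. left; auto.
  - intros Ej x y H. right; left; auto.
Qed.

Definition VV (n : nat) (x : W) : Prop := In (Var n) (cur (proj1_sig x)).

Lemma truth : forall phi, In phi Phi -> forall x : W, forces RR SS VV x phi <-> In phi (cur (proj1_sig x)).
Proof.
  induction phi; intros Hphi [p Hp]; simpl (proj1_sig _);
    destruct (atom_val _ _ _ _ (valid_atom p Hp)) as [v Hv].
  - simpl. unfold VV. simpl. tauto.
  - simpl. split; auto. intros _. apply Hv; auto.
  - simpl. split; [tauto|]. intros H. apply Hv in H; auto. discriminate.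
  - destruct (Phi_Imp _ _ _ _ _ Hphi) as [H1 H2].
    specialize (IHphi1 H1 (exist _ p Hp)). specialize (IHphi2 H2 (exist _ p Hp)). simpl in *.
    rewrite (Hv _ Hphi). rewrite (Hv _ H1) in IHphi1. rewrite (Hv _ H2) in IHphi2. simpl.
    destruct (peval v phi1), (peval v phi2); simpl; intuition congruence.
  - destruct (Phi_Or _ _ _ _ _ Hphi) as [H1 H2].
    specialize (IHphi1 H1 (exist _ p Hp)). specialize (IHphi2 H2 (exist _ p Hp)). simpl in *.
    rewrite (Hv _ Hphi). rewrite (Hv _ H1) in IHphi1. rewrite (Hv _ H2) in IHphi2. simpl.
    destruct (peval v phi1), (peval v phi2); simpl; intuition congruence.
  - destruct (Phi_And _ _ _ _ _ Hphi) as [H1 H2].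
    specialize (IHphi1 H1 (exist _ p Hp)). specialize (IHphi2 H2 (exist _ p Hp)). simpl in *.
    rewrite (Hv _ Hphi). rewrite (Hv _ H1) in IHphi1. rewrite (Hv _ H2) in IHphi2. simpl.
    destruct (peval v phi1), (peval v phi2); simpl; intuition congruence.
  -
    pose proof (Phi_Box _ _ _ _ Hphi) as HD. simpl. split.
    + intros H. apply NNPP; intros Hn.
      destruct (E0 j1 j5 A0 (cur p) phi (valid_atom p Hp) Hphi Hn) as [T [HT [HR HnT]]].
      set (z := exist valid ((T, None) :: p) (valid_child p T Hp HT HR) : W).
      assert (Hz : RR (exist _ p Hp) z) by (exists [(T, None)]; split; [discriminate|reflexivity]).
      specialize (H z Hz). apply (IHphi HD z) in H. simpl in H. contradiction.
    + intros H [q Hq] [e [He E]]. apply (IHphi HD). simpl in *. subst q.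
      pose proof (valid_rel e p Hq He (valid_ne p Hp)) as HR. apply HR; auto.
  -
    destruct (Phi_Rhd2 _ _ _ _ _ Hphi) as [HB HC].
    pose proof (Phi_Rhd j1 j5 A0 _ _ Hphi) as HRh. simpl. split.
    + intros H. apply NNPP; intros Hn.
      destruct (E2 j1 j5 A0 (cur p) phi1 phi2 (valid_atom p Hp) HRh Hn) as [D [HD [HR [HBD Ht]]]].
      set (y := exist valid ((D, Some phi2) :: p) (valid_tchild p D phi2 Hp HD HR HC Ht) : W).
      assert (Hy : RR (exist _ p Hp) y) by (exists [(D, Some phi2)]; split; [discriminate|reflexivity]).
      assert (HyB : forces RR SS VV y phi1) by (apply (IHphi1 HB y); simpl; auto).
      destruct (H y Hy HyB) as [[r Hr] [Hz [HS HzC]]].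
      apply (IHphi2 HC) in HzC. simpl in HzC.
      pose proof Ht as [_ [Ht1 Ht5]].
      destruct HS as [[Ej E]|[[Ej Hyz]|Hc]].
      * apply (f_equal (@proj1_sig _ _)) in E. simpl in E. subst r. simpl in HzC. exact (Ht1 Ej HzC).
      * destruct Hyz as [e [He E]]. simpl in E. subst r.
        pose proof (valid_rel e _ Hr He ltac:(discriminate)) as HR'. simpl in HR'.
        destruct HR' as [HR' _]. destruct (HR' _ (Ht5 Ej)) as [HnC _].
        destruct (atom_val _ _ _ _ (valid_atom _ Hr)) as [w Hw].
        assert (PnC : In (Neg phi2) Phi) by (apply Phi_Box; apply (Phi_rh_root j1 j5 A0 phi1 phi2 _ HRh); auto).
        apply Hw in HnC; auto. apply Hw in HzC; auto. unfold Neg in HnC; simpl in HnC. rewrite HzC in HnC; discriminate.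
      * simpl in Hc. apply (Hc Hz HzC).
    + intros Hin [q Hq] [e [He E]] HyB. simpl in E. subst q.
      apply (IHphi1 HB) in HyB. simpl in HyB.
      destruct e as [|[D t] e']; [congruence|]. simpl in HyB.
      assert (Hw : exists T, atom T /\ Rel (cur p) T /\ In phi2 T /\
                   core ((D, t) :: e' ++ p) ((T, None) :: p)).
      { destruct t as [C0|]; [destruct e' as [|a e'']|].
        - simpl in Hq. destruct (valid_tag D C0 p Hq) as [_ [Ht _]].
          destruct (Ht _ _ Hin HyB) as [T [HT [HR [HTC HTn]]]].
          exists T. split; [auto|split; [auto|split; [auto|]]]. simpl. intros _; auto.
        - pose proof (valid_rel ((D, Some C0) :: a :: e'') p Hq ltac:(discriminate) (valid_ne p Hp)) as HR.
          destruct (E1 j1 j5 A0 (cur p) D phi1 phi2 (valid_atom p Hp) (proj1 Hq) HR Hin HyB) as [T [HT [HR' HTC]]].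
          exists T. split; [auto|split; [auto|split; [auto|]]]. simpl. intros [e2 [He2 E2]]. exfalso.
          apply (f_equal (@length _)) in E2. simpl in E2. rewrite !length_app in E2. simpl in E2.
          destruct e2; [congruence|]. simpl in E2. rewrite length_app in E2. lia.
        - pose proof (valid_rel ((D, None) :: e') p Hq ltac:(discriminate) (valid_ne p Hp)) as HR2.
          destruct (E1 j1 j5 A0 (cur p) D phi1 phi2 (valid_atom p Hp) (proj1 Hq) HR2 Hin HyB) as [T [HT [HR' HTC]]].
          exists T. split; [auto|split; [auto|split; [auto|exact I]]]. }
      destruct Hw as [T [HT [HR [HTC Hcore]]]].
      exists (exist valid ((T, None) :: p) (valid_child p T Hp HT HR)). split; [|split].
      * exists [(T, None)]; split; [discriminate|reflexivity].
      * right; right. exact Hcore.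
      * apply (IHphi2 HC). simpl. auto.
Qed.

Lemma countermodel : ~ pv A0 ->
  exists (W : Type) (R S : W -> W -> Prop), finite_type W /\ simplified_L_frame j1 j5 W R S /\ ~ valid_in R S A0.
Proof.
  intros HA.
  assert (Hc : cons_ j1 j5 (Neg A0)).
  { intros H; apply HA. revert H; apply mp1; btaut. }
  destruct (lind j1 j5 A0 _ Hc) as [D0 [HD0 Hc0]].
  assert (HnA : ~ In A0 D0).
  { apply (lind_nmem j1 j5 A0 (Neg A0) D0 A0 Hc0 (Phi_A0 j1 j5 A0)). intros v; unfold Neg; simpl.
    destruct (peval v A0); auto. }
  assert (Hr : valid [(D0, None)]) by (simpl; auto).
  exists W, RR, SS. split; [|split].
  - apply (finite_sig valid Enum). apply valid_enum.
  - apply frame_ok. constructor. exact (exist _ _ Hr).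
  - intros Hv. specialize (Hv VV (exist _ _ Hr)). apply (truth A0 (Phi_A0 j1 j5 A0)) in Hv. simpl in Hv. contradiction.
Qed.

End Model.

Theorem theorem3p1 (j1 j5 : bool) (A : form) :
  (prov j1 j5 A <->
   (forall (W : Type) (R S : W -> W -> Prop),
      simplified_L_frame j1 j5 W R S -> valid_in R S A)) /\
  ((forall (W : Type) (R S : W -> W -> Prop),
      simplified_L_frame j1 j5 W R S -> valid_in R S A) <->
   (forall (W : Type) (R S : W -> W -> Prop),
      finite_type W -> simplified_L_frame j1 j5 W R S -> valid_in R S A)).
Proof.
  assert (Hfin : (forall (W : Type) (R S : W -> W -> Prop),
      finite_type W -> simplified_L_frame j1 j5 W R S -> valid_in R S A) -> prov j1 j5 A).
  { intros H. apply NNPP; intros Hn.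
    destruct (countermodel j1 j5 A Hn) as [W [R [S [Hf [HF Hv]]]]]. apply Hv. apply H; auto. }
  split; split.
  - intros HP. apply soundness; auto.
  - intros H. apply Hfin. intros W R S _; apply H.
  - intros H W R S _; apply H.
  - intros H. apply soundness. apply Hfin; auto.
Qed.
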